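(* Let $t\ge1$, $w\in\mathbb{R}^t_{++}$, $\rho>0$, and let $\partial_{\rm HS}\mathrm{Prox}_{\rho\|w\circ\cdot\|_1^2}:\mathbb{R}^t\rightrightarrows\mathbb{R}^{t\times t}$ be the multifunction defined in the context. Then $\partial_{\rm HS}\mathrm{Prox}_{\rho\|w\circ\cdot\|_1^2}$ is a nonempty, compact valued and upper-semicontinuous multifunction; for every $a\in\mathbb{R}^t$ all elements of $\partial_{\rm HS}\mathrm{Prox}_{\rho\|w\circ\cdot\|_1^2}(a)$ are symmetric and positive semidefinite; and $\mathrm{Prox}_{\rho\|w\circ\cdot\|_1^2}(\cdot)$ is strongly semismooth with respect to $\partial_{\rm HS}\mathrm{Prox}_{\rho\|w\circ\cdot\|_1^2}(\cdot)$.
   Context: $\mathrm{Prox}_{\rho\|w\circ\cdot\|_1^2}(a):=\arg\min_z\{\frac12\|z-a\|^2+\rho\|w\circ z\|_1^2\}$, $\circ$ the Hadamard product. Let $Q:=I_t+2\rho ww^T$. For $a\in\mathbb{R}^t$ let $x(a):=\arg\min_{x\in\mathbb{R}^t}\{\frac12\langle x,Qx\rangle-\langle x,a\rangle\mid x\ge0\}$ and let $\mu(a)$ be the (unique) multiplier with $Qx(a)-a+\mu(a)=0$, $\mu(a)\circ x(a)=0$, $\mu(a)\le0$. Let $I(a):=\{i\mid x(a)_i=0\}$, $\mathcal{K}(a):=\{K\subseteq\{1,\dots,t\}\mid \mathrm{supp}(\mu(a))\subseteq K\subseteq I(a)\}$, where $\mathrm{supp}(\mu)=\{i:\mu_i\ne0\}$,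 and let $I_K$ be the matrix of rows of $I_t$ indexed by $K$. Define $\widehat\partial_{\rm HS}x(a)$ to be: $\{Q^{-1}\}$ if $Q^{-1}a>0$ (entrywise); $\{Q^{-1}-Q^{-1}I_K^T(I_KQ^{-1}I_K^T)^{-1}I_KQ^{-1}\mid K\in\mathcal{K}(a)\}$ if $(Q^{-1}a)_i<0$ for some $i$; and $\{Q^{-1}\}\cup\{Q^{-1}-Q^{-1}I_K^T(I_KQ^{-1}I_K^T)^{-1}I_KQ^{-1}\mid K\in\mathcal{K}(a)\}$ otherwise. Let $\mathrm{SGN}(z):=\{u\in\mathbb{R}^t: u_j=\mathrm{sign}(z_j)\text{ if }z_j\ne0,\ u_j\in[-1,1]\text{ if }z_j=0\}$. Then $\partial_{\rm HS}\mathrm{Prox}_{\rho\|w\circ\cdot\|_1^2}(a):=\{\mathrm{Diag}(\theta)P\,\mathrm{Diag}(\theta)\mid\theta\in\mathrm{SGN}(a),\ P\in\widehat\partial_{\rm HS}x(|a|)\}$. A locally Lipschitz $F$ is strongly semismooth at $a$ with respect to a multifunction $\mathcal{J}$ if $F$ is directionally differentiable at $a$ and $\|F(a')-F(a)-M(a'-a)\|=O(\|a'-a\|^2)$ as $a'\to a$, uniformly over $M\in\mathcal{J}(a')$; strongly semismooth means at every point. *)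

(* Defs.v *)
From HB Require Import structures.
From mathcomp Require Import all_boot all_order all_algebra.
From mathcomp Require Import all_classical all_reals all_analysis.
Set Implicit Arguments. Unset Strict Implicit. Unset Printing Implicit Defensive.
Import Order.TTheory GRing.Theory Num.Theory.
Import numFieldNormedType.Exports.
Local Open Scope classical_set_scope.
Local Open Scope ring_scope.

Section ProxDefs.
Variables (R : realType) (t : nat).
Implicit Types (a z x v w : 'cV[R]_t) (rho : R).

Definition sqnorm v : R := \sum_(i < t) v i 0 ^+ 2.
Definition inner x v : R := \sum_(i < t) x i 0 * v i 0.

Definition prox_obj rho w a z : R :=
  2^-1 * sqnorm (z - a) + rho * (\sum_(i < t) `|w i 0 * z i 0|) ^+ 2.

(* Prox_{rho ||w o .||_1^2}(a) := argmin_z prox_obj (the minimizer is unique) *)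
Definition Prox rho w a : 'cV[R]_t :=
  xget 0 [set z | forall z', prox_obj rho w a z <= prox_obj rho w a z'].

Definition Qmat rho w : 'M[R]_t := 1%:M + (2 * rho) *: (w *m w^T).
Definition Qinv rho w : 'M[R]_t := invmx (Qmat rho w).

Definition qp_obj rho w a x : R := 2^-1 * inner x (Qmat rho w *m x) - inner x a.
Definition nonneg_vec x : Prop := forall i, 0 <= x i 0.
Definition xsol rho w a : 'cV[R]_t :=
  xget 0 [set x | nonneg_vec x /\
                  forall x', nonneg_vec x' -> qp_obj rho w a x <= qp_obj rho w a x'].

(* the multiplier mu(a), uniquely determined by Q x(a) - a + mu(a) = 0 *)
Definition mult rho w a : 'cV[R]_t := a - Qmat rho w *m xsol rho w a.

Definition Iset rho w a : {set 'I_t} := [set i | xsol rho w a i 0 == 0].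
Definition suppmu rho w a : {set 'I_t} := [set i | mult rho w a i 0 != 0].
Definition Kfam rho w a (K : {set 'I_t}) : Prop :=
  suppmu rho w a \subset K /\ K \subset Iset rho w a.

(* I_K : the rows of I_t indexed by K (in increasing order) *)
Definition IK (K : {set 'I_t}) : 'M[R]_(#|K|, t) :=
  \matrix_(k < #|K|, j < t) (enum_val k == j)%:R.

Definition PK rho w (K : {set 'I_t}) : 'M[R]_t :=
  Qinv rho w - Qinv rho w *m (IK K)^T
               *m invmx (IK K *m Qinv rho w *m (IK K)^T) *m IK K *m Qinv rho w.

Definition hatJ rho w a (P : 'M[R]_t) : Prop :=
  let b := Qinv rho w *m a in
  if `[< forall i, 0 < b i 0 >] then P = Qinv rho w
  else if `[< exists i, b i 0 < 0 >] then exists2 K, Kfam rho w a K & P = PK rho w K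
  else P = Qinv rho w \/ exists2 K, Kfam rho w a K & P = PK rho w K.

Definition SGN z (u : 'cV[R]_t) : Prop :=
  forall j, (z j 0 != 0 -> u j 0 = Num.sg (z j 0)) /\
            (z j 0 = 0 -> -1 <= u j 0 <= 1).

Definition absv a : 'cV[R]_t := \col_i `|a i 0|.
Definition Diagv (u : 'cV[R]_t) : 'M[R]_t := diag_mx u^T.

Definition dHSProx rho w a (M : 'M[R]_t) : Prop :=
  exists theta P, [/\ SGN a theta, hatJ rho w (absv a) P &
                      M = Diagv theta *m P *m Diagv theta].

End ProxDefs.

Definition upper_semicontinuous_mf (R : realType) (t : nat)
  (J : 'cV[R]_t -> 'M[R]_t -> Prop) : Prop :=
  forall a (U : set 'M[R]_t), open U -> (J a : set _) `<=` U ->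
    \forall a' \near a, (J a' : set _) `<=` U.

Definition locally_lipschitz (R : realType) (t : nat) (F : 'cV[R]_t -> 'cV[R]_t) : Prop :=
  forall a : 'cV[R]_t, exists L : R, exists2 r : R, 0 < r &
    forall x y : 'cV[R]_t, `|x - a| < r -> `|y - a| < r ->
      `|F x - F y| <= L * `|x - y|.

Definition dir_differentiable (R : realType) (t : nat) (F : 'cV[R]_t -> 'cV[R]_t)
  (a : 'cV[R]_t) : Prop :=
  forall d : 'cV[R]_t, exists l : 'cV[R]_t,
    (fun tau : R => tau^-1 *: (F (a + tau *: d) - F a)) @ (0 : R)^'+ --> l.

Definition strongly_semismooth_at (R : realType) (t : nat) (F : 'cV[R]_t -> 'cV[R]_t)
  (J : 'cV[R]_t -> 'M[R]_t -> Prop) (a : 'cV[R]_t) : Prop :=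
  dir_differentiable F a /\
  exists2 C : R, 0 < C &
    \forall a' \near a, forall M, J a' M ->
      `|F a' - F a - M *m (a' - a)| <= C * `|a' - a| ^+ 2.

Definition strongly_semismooth (R : realType) (t : nat) (F : 'cV[R]_t -> 'cV[R]_t)
  (J : 'cV[R]_t -> 'M[R]_t -> Prop) : Prop :=
  locally_lipschitz F /\ forall a, strongly_semismooth_at F J a.

(* Main.v *)
Require Import Defs.
From HB Require Import structures.
From mathcomp Require Import all_boot all_order all_algebra.
From mathcomp Require Import all_classical all_reals all_analysis.
From mathcomp Require Import ring lra.
Import Order.TTheory GRing.Theory Num.Theory.
Import numFieldNormedType.Exports.
Local Open Scope classical_set_scope.
Local Open Scope ring_scope.
Set Implicit Arguments. Unset Strict Implicit. Unset Printing Implicit Defensive.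
Section G. Variable R : realType.
Lemma max0_lip (u v : R) : `|Num.max u 0 - Num.max v 0| <= `|u - v|.
Proof.
have h1 := ler_norm (u - v); have h2 : -(u - v) <= `|u - v| by rewrite -normrN ler_norm.
rewrite ler_norml.
have [hu|hu] := leP u 0; have [hv|hv] := leP v 0;
  rewrite ?(max_l hu) ?(max_r hu) ?(max_l hv) ?(max_r hv) ?(max_l (ltW hu)) ?(max_l (ltW hv));
  apply/andP; split; lra.
Qed.
Lemma lip_cvg (V : normedModType R) (f : V -> R) (x : V) (L : R) :
  0 <= L -> (forall y, `|f y - f x| <= L * `|y - x|) -> f @ x --> f x.
Proof.
move=> L0 H; apply/cvgrPdist_lt => e e0.
apply/nbhs_normP; exists (e / (L + 1)) => /=.
  by rewrite divr_gt0 // ltr_wpDl.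
move=> y /= hy; rewrite distrC; apply: le_lt_trans (H y) _.
rewrite distrC in hy.
have L1 : 0 < L + 1 by rewrite ltr_wpDl.
apply: (@le_lt_trans _ _ (L * (e / (L + 1)))).
  by rewrite ler_wpM2l // ltW.
rewrite mulrA ltr_pdivrMr //. nra.
Qed.
Lemma lipR_cont (f : R -> R) (L : R) :
  0 <= L -> (forall x y, `|f y - f x| <= L * `|y - x|) -> continuous f.
Proof. move=> L0 H x; exact: (@lip_cvg R^o f x L L0 (H x)). Qed.
End G.
Section S.
Variables (R : realType) (t : nat) (w : 'cV[R]_t) (rho : R).
Hypothesis hw : forall i, 0 < w i 0.
Hypothesis hrho : 0 < rho.
Implicit Types (x y v a d z u : 'cV[R]_t).

Local Notation c := (2 * rho).
Local Notation Q := (Qmat rho w).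

Lemma c_gt0 : 0 < c. Proof. by rewrite mulr_gt0. Qed.

Lemma Qmul x i : (Q *m x) i 0 = x i 0 + c * w i 0 * inner w x.
Proof.
rewrite /Qmat mulmxDl mul1mx -scalemxAl -mulmxA !mxE big_ord1 !mxE.
rewrite /inner; congr (_ + _); rewrite mulrA; congr (_ * _).
by under eq_bigr do rewrite mxE.
Qed.

Lemma innerQ x : inner x (Q *m x) = sqnorm x + c * (inner w x) ^+ 2.
Proof.
rewrite /inner /sqnorm.
under eq_bigr do rewrite Qmul mulrDr.
rewrite big_split /=.
have -> : \sum_(i < t) x i 0 * x i 0 = \sum_(i < t) x i 0 ^+ 2.
  by apply: eq_bigr => i _; rewrite expr2.
congr (_ + _).
rewrite expr2 mulr_sumr [in RHS]mulr_sumr; apply: eq_bigr => i _.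
rewrite /inner; ring.
Qed.

Lemma innerDl x y v : inner (x + y) v = inner x v + inner y v.
Proof. by rewrite /inner -big_split; apply: eq_bigr => i _; rewrite mxE mulrDl. Qed.
Lemma innerNl x v : inner (- x) v = - inner x v.
Proof. by rewrite /inner -sumrN; apply: eq_bigr => i _; rewrite mxE mulNr. Qed.
Lemma innerBl x y v : inner (x - y) v = inner x v - inner y v.
Proof. by rewrite innerDl innerNl. Qed.
Lemma innerC x v : inner x v = inner v x.
Proof. by rewrite /inner; apply: eq_bigr => i _; rewrite mulrC. Qed.
Lemma innerDr x y v : inner v (x + y) = inner v x + inner v y.
Proof. by rewrite innerC innerDl !(innerC v). Qed.
Lemma innerBr x y v : inner v (x - y) = inner v x - inner v y.
Proof. by rewrite innerC innerBl !(innerC v). Qed.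
Lemma sqnormE x : sqnorm x = inner x x.
Proof. by rewrite /sqnorm /inner; apply: eq_bigr => i _; rewrite expr2. Qed.
Lemma innerQ2 y x : inner y (Q *m x) = inner y x + c * inner w y * inner w x.
Proof.
rewrite /inner; under eq_bigr do rewrite Qmul mulrDr.
rewrite big_split /=; congr (_ + _).
rewrite -/(inner w x).
have -> : c * (\sum_(i < t) w i 0 * y i 0) * inner w x =
  \sum_(i < t) (c * (w i 0 * y i 0) * inner w x) by rewrite -mulr_suml -mulr_sumr.
by apply: eq_bigr => i _; ring.
Qed.
Lemma sqnorm_ge0 x : 0 <= sqnorm x.
Proof. by apply: sumr_ge0 => i _; rewrite sqr_ge0. Qed.
Lemma sqnorm_eq0 x : sqnorm x = 0 -> x = 0.
Proof.
move=> /eqP; rewrite /sqnorm psumr_eq0; last by move=> i _; rewrite sqr_ge0.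
move=> /allP H; apply/matrixP => i j; rewrite (ord1 j) mxE.
by have := H i (mem_index_enum _); rewrite sqrf_eq0 => /eqP.
Qed.

Lemma qp_diff a x y : qp_obj rho w a y - qp_obj rho w a x =
  inner (y - x) (Q *m x - a) + 2^-1 * sqnorm (y - x) + rho * (inner w (y - x)) ^+ 2.
Proof.
rewrite /qp_obj !innerQ2 !sqnormE !innerBl !innerBr !innerQ2 (innerC x y).
by field.
Qed.

Lemma mxBE (A B : 'cV[R]_t) i : (A - B) i 0 = A i 0 - B i 0.
Proof. by rewrite !mxE. Qed.
Lemma mxDE (A B : 'cV[R]_t) i : (A + B) i 0 = A i 0 + B i 0.
Proof. by rewrite !mxE. Qed.

Definition KKT a x := [/\ nonneg_vec x, (forall i, a i 0 <= (Q *m x) i 0) &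
  (forall i, 0 < x i 0 -> (Q *m x) i 0 = a i 0)].

Lemma KKT_opt a x y : KKT a x -> nonneg_vec y ->
  qp_obj rho w a x + 2^-1 * sqnorm (y - x) <= qp_obj rho w a y.
Proof.
move=> [x0 mu0 cs] y0.
rewrite -subr_ge0.
have -> : forall u v h : R, v - (u + h) = (v - u) - h by move=> u v h; ring.
rewrite qp_diff.
have -> : inner (y - x) (Q *m x - a) = inner y (Q *m x - a).
  rewrite innerBl.
  suff -> : inner x (Q *m x - a) = 0 by rewrite subr0.
  rewrite /inner big1 // => i _; rewrite mxBE.
  have := x0 i; rewrite le_eqVlt => /orP[/eqP <-|/cs ->]; first by rewrite mul0r.
  by rewrite subrr mulr0.
have -> : forall u v h : R, u + h + v - h = u + v by move=> u v h; ring.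
apply: addr_ge0; last by rewrite mulr_ge0 ?sqr_ge0 // ltW.
apply: sumr_ge0 => i _; rewrite mxBE; apply: mulr_ge0 => //.
by rewrite subr_ge0.
Qed.

Definition xk a s : 'cV[R]_t := \col_i Num.max (a i 0 - c * w i 0 * s) 0.
Definition phi a s := s - inner w (xk a s).

Lemma xk_ge0 a s : nonneg_vec (xk a s).
Proof. by move=> i; rewrite mxE le_max lexx orbT. Qed.

Lemma phi_cont a : continuous (phi a).
Proof.
apply: (@lipR_cont _ _ (1 + \sum_(i < t) w i 0 * (c * w i 0))).
  apply: addr_ge0 => //; apply: sumr_ge0 => i _.
  by apply/ltW; rewrite !mulr_gt0 // c_gt0.
move=> x y; rewrite /phi.
have -> : y - inner w (xk a y) - (x - inner w (xk a x)) =
  (y - x) - \sum_(i < t) w i 0 * (xk a y i 0 - xk a x i 0).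
  rewrite /inner; under [in RHS]eq_bigr do rewrite mulrBr.
  by rewrite sumrB; ring.
apply: le_trans (ler_normB _ _) _.
rewrite mulrDl mul1r lerD2l mulr_suml.
apply: le_trans (ler_norm_sum _ _ _) _.
apply: ler_sum => i _; rewrite normrM gtr0_norm // -mulrA ler_wpM2l ?(ltW (hw i)) //.
rewrite !mxE; apply: le_trans (max0_lip _ _) _.
have -> : a i 0 - c * w i 0 * y - (a i 0 - c * w i 0 * x) = - (c * w i 0) * (y - x) by ring.
by rewrite normrM normrN [`|c * _|]gtr0_norm // mulr_gt0 // c_gt0.
Qed.

Lemma KKT_xk a s : phi a s = 0 -> KKT a (xk a s).
Proof.
move=> /eqP; rewrite /phi subr_eq0 => /eqP hs.
split; first exact: xk_ge0.
  move=> i; rewrite Qmul -hs mxE.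
  have h : a i 0 - c * w i 0 * s <= Num.max (a i 0 - c * w i 0 * s) 0.
    by rewrite le_max lexx.
  lra.
move=> i; rewrite Qmul -hs mxE => hp.
have h : 0 < a i 0 - c * w i 0 * s.
  by move: hp; rewrite lt_max ltxx orbF.
rewrite (max_l (ltW h)); ring.
Qed.

Lemma KKT_exists a : exists x, KKT a x.
Proof.
pose S := \sum_(i < t) w i 0 * Num.max (a i 0) 0.
have S0 : 0 <= S.
  by apply: sumr_ge0 => i _; rewrite mulr_ge0 ?(ltW (hw i)) // le_max lexx orbT.
have h0 : phi a 0 <= 0.
  rewrite /phi sub0r oppr_le0; apply: sumr_ge0 => i _; rewrite mxE.
  by rewrite mulr_ge0 ?(ltW (hw i)) // le_max lexx orbT.
have hS : 0 <= phi a S.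
  rewrite /phi subr_ge0 /inner; apply: ler_sum => i _; rewrite mxE.
  rewrite ler_wpM2l ?(ltW (hw i)) // ge_max [0 <= _]le_max lexx orbT andbT le_max.
  apply/orP; left; rewrite lerBlDr lerDl; apply: mulr_ge0 => //.
  by apply/ltW; rewrite mulr_gt0 // c_gt0.
have [s _ hs] := @IVT R (phi a) 0 S 0 S0 (continuous_subspaceT (phi_cont (a:=a)))
  ltac:(by rewrite ge_min h0 /= le_max hS orbT).
by exists (xk a s); apply: KKT_xk.
Qed.

Lemma KKT_xsol a x : KKT a x -> xsol rho w a = x.
Proof.
move=> hx.
have ex : exists z, [set x | nonneg_vec x /\
    forall x', nonneg_vec x' -> qp_obj rho w a x <= qp_obj rho w a x'] z.
  exists x; split; first by case: hx.
  move=> y hy; apply: le_trans (KKT_opt hx hy).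
  by rewrite lerDl mulr_ge0 // sqnorm_ge0.
have [z0 zmin] := xgetPex 0 ex.
rewrite /xsol; set z := xget _ _ in z0 zmin *.
have h1 := zmin x (let: And3 h _ _ := hx in h).
have h2 := KKT_opt hx z0.
have : sqnorm (z - x) <= 0.
  have : 2^-1 * sqnorm (z - x) <= 0 by lra.
  by rewrite pmulr_rle0 // invr_gt0.
move=> h3; apply/eqP; rewrite -subr_eq0; apply/eqP/sqnorm_eq0.
by apply/le_anti; rewrite h3 sqnorm_ge0.
Qed.

Lemma xsol_KKT a : KKT a (xsol rho w a).
Proof. by have [x hx] := KKT_exists a; rewrite (KKT_xsol hx). Qed.

Local Notation x_ a := (xsol rho w a).

Lemma xsol_ge0 a i : 0 <= x_ a i 0.
Proof. by case: (xsol_KKT a) => h _ _; apply: h. Qed.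

Lemma innerw_ge0 v : nonneg_vec v -> 0 <= inner w v.
Proof. by move=> hv; apply: sumr_ge0 => i _; rewrite mulr_ge0 ?(ltW (hw i)). Qed.

Lemma xsol_pos a i : 0 < x_ a i 0 -> x_ a i 0 + c * w i 0 * inner w (x_ a) = a i 0.
Proof. by case: (xsol_KKT a) => _ _ h /h; rewrite Qmul. Qed.

Lemma xsol_le a i : x_ a i 0 + c * w i 0 * inner w (x_ a) >= a i 0.
Proof. by case: (xsol_KKT a) => _ h _; rewrite -Qmul. Qed.

Lemma cws_ge0 a i : 0 <= c * w i 0 * inner w (x_ a).
Proof.
rewrite mulr_ge0 // ?innerw_ge0 //; last by move=> j; exact: xsol_ge0.
by apply/ltW; rewrite mulr_gt0 // c_gt0.
Qed.

Lemma xsol_le_a a i : x_ a i 0 <= Num.max (a i 0) 0.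
Proof.
have := xsol_ge0 a i; rewrite le_eqVlt => /orP[/eqP <-|h].
  by rewrite le_max lexx orbT.
have := xsol_pos h; have := cws_ge0 a i => h1 h2.
rewrite le_max; apply/orP; left; lra.
Qed.

Lemma xsol_a0 a i : a i 0 <= 0 -> x_ a i 0 = 0.
Proof.
move=> ha; apply/le_anti; rewrite xsol_ge0 andbT.
by apply: le_trans (xsol_le_a a i) _; rewrite ge_max ha lexx.
Qed.

Definition absv' a : 'cV[R]_t := absv a.
Lemma absvE a i : absv a i 0 = `|a i 0|.
Proof. by rewrite mxE. Qed.

Definition proxf a : 'cV[R]_t := \col_i (Num.sg (a i 0) * x_ (absv a) i 0).

Lemma sum_abs_w z : \sum_(i < t) `|w i 0 * z i 0| = inner w (absv z).
Proof. by apply: eq_bigr => i _; rewrite absvE normrM gtr0_norm. Qed.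

Lemma inner_absvv z : inner (absv z) (absv z) = inner z z.
Proof.
apply: eq_bigr => i _; rewrite !absvE -normrM ger0_norm //.
by rewrite -expr2 sqr_ge0.
Qed.

Lemma prox_identity a z : prox_obj rho w a z =
  qp_obj rho w (absv a) (absv z) + 2^-1 * sqnorm (absv a) +
  (inner (absv z) (absv a) - inner z a).
Proof.
rewrite /prox_obj sum_abs_w /qp_obj innerQ2 !sqnormE !innerBl !innerBr !inner_absvv.
rewrite (innerC a z).
by field.
Qed.

Lemma D_ge0 z a : 0 <= inner (absv z) (absv a) - inner z a.
Proof.
rewrite /inner -sumrB; apply: sumr_ge0 => i _; rewrite !absvE subr_ge0 -normrM.
exact: ler_norm.
Qed.

Lemma absv_proxf a : absv (proxf a) = x_ (absv a).
Proof.
apply/matrixP => i j; rewrite (ord1 j) absvE mxE normrM.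
have [h|h|h] := ltrgtP (a i 0) 0.
- by rewrite ltr0_sg // normrN normr1 mul1r ger0_norm // xsol_ge0.
- by rewrite gtr0_sg // normr1 mul1r ger0_norm // xsol_ge0.
- by rewrite h sgr0 normr0 mul0r xsol_a0 // absvE h normr0.
Qed.

Lemma inner_proxf a : inner (proxf a) a = inner (absv (proxf a)) (absv a).
Proof.
rewrite absv_proxf; apply: eq_bigr => i _; rewrite mxE absvE.
rewrite -mulrA mulrC -mulrA; congr (_ * _).
by rewrite mulrC -normrEsg.
Qed.

Lemma absv_ge0 a : nonneg_vec (absv a).
Proof. by move=> i; rewrite absvE. Qed.

Lemma prox_key a z : prox_obj rho w a (proxf a) +
  (2^-1 * sqnorm (absv z - x_ (absv a)) + (inner (absv z) (absv a) - inner z a))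
  <= prox_obj rho w a z.
Proof.
rewrite !prox_identity -inner_proxf absv_proxf subrr addr0.
have := KKT_opt (xsol_KKT (absv a)) (absv_ge0 z).
set A := qp_obj _ _ _ _; set B := qp_obj _ _ _ _.
move=> h; lra.
Qed.

Lemma Prox_eq a : Prox rho w a = proxf a.
Proof.
have ex : exists z, [set z | forall z', prox_obj rho w a z <= prox_obj rho w a z'] z.
  exists (proxf a) => z' /=; apply: le_trans (prox_key a z').
  by rewrite lerDl addr_ge0 ?D_ge0 // mulr_ge0 ?sqnorm_ge0.
have zmin := xgetPex 0 ex.
rewrite /Prox; set z := xget _ _ in zmin *.
have h1 := zmin (proxf a); have h2 := prox_key a z.
have hs0 := sqnorm_ge0 (absv z - x_ (absv a)); have hd0 := D_ge0 z a.
have hs : sqnorm (absv z - x_ (absv a)) = 0 by lra.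
have hd : inner (absv z) (absv a) - inner z a = 0 by lra.
have hz : absv z = x_ (absv a).
  by apply/eqP; rewrite -subr_eq0; apply/eqP/sqnorm_eq0.
move: hd; rewrite /inner -sumrB => /eqP; rewrite psumr_eq0; last first.
  by move=> i _; rewrite !absvE subr_ge0 -normrM ler_norm.
move=> /allP hall; apply/matrixP => i j; rewrite (ord1 j) mxE -hz absvE.
have := hall i (mem_index_enum _); rewrite !absvE subr_eq0 -normrM => /eqP hi.
have [h|h|h] := ltrgtP (a i 0) 0.
- rewrite ltr0_sg // mulN1r.
  have [hz0|hz0] := ltrP 0 (z i 0); last by rewrite ler0_norm // opprK.
  have : z i 0 * a i 0 < 0 by rewrite pmulr_rlt0.
  rewrite -hi => h3; have := normr_ge0 (z i 0 * a i 0); lra.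
- rewrite gtr0_sg // mul1r.
  have [hz0|hz0] := lerP 0 (z i 0); first by rewrite ger0_norm.
  have : z i 0 * a i 0 < 0 by rewrite pmulr_llt0.
  rewrite -hi => h3; have := normr_ge0 (z i 0 * a i 0); lra.
- rewrite h sgr0 mul0r.
  have := hz; move/matrixP => /(_ i 0); rewrite absvE xsol_a0 ?absvE ?h ?normr0 //.
  by move/eqP; rewrite normr_eq0 => /eqP.
Qed.

Lemma innerE u v : inner u v = (u^T *m v) 0 0.
Proof. by rewrite mxE; apply: eq_bigr => i _; rewrite mxE. Qed.

Lemma inner_tr (M : 'M[R]_t) u v : inner u (M^T *m v) = inner (M *m u) v.
Proof. by rewrite !innerE mulmxA -trmx_mul. Qed.

Lemma inner_sym (M : 'M[R]_t) u v : M^T = M -> inner u (M *m v) = inner (M *m u) v.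
Proof. by move=> hM; rewrite -{1}hM inner_tr. Qed.

Lemma unit_of_inj n (A : 'M[R]_n) :
  (forall u : 'cV[R]_n, A *m u = 0 -> u = 0) -> A \in unitmx.
Proof.
move=> H; rewrite -unitmx_tr -row_free_unit -kermx_eq0; apply/eqP/row_matrixP => i.
rewrite row0; set u := row i _.
have hu : u *m A^T = 0 by rewrite /u -row_mul mulmx_ker row0.
have : A *m u^T = 0 by rewrite -(trmxK A) -trmx_mul hu trmx0.
by move/H => /(congr1 trmx); rewrite trmxK trmx0.
Qed.

Lemma Q_sym : Q^T = Q.
Proof.
by rewrite /Qmat linearD /= trmx1 linearZ /= trmx_mul trmxK.
Qed.

Lemma Q_pos u : Q *m u = 0 -> u = 0.
Proof.
move=> h; apply: sqnorm_eq0; apply/le_anti; rewrite sqnorm_ge0 andbT.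
have : inner u (Q *m u) = 0 by rewrite h /inner big1 // => i _; rewrite mxE mulr0.
rewrite innerQ => h2; have : 0 <= c * inner w u ^+ 2 by rewrite mulr_ge0 ?sqr_ge0 // ltW // c_gt0.
lra.
Qed.

Lemma Q_unit : Q \in unitmx.
Proof. exact: unit_of_inj Q_pos. Qed.

Local Notation Qi := (Qinv rho w).

Lemma QQi : Q *m Qi = 1%:M. Proof. exact: mulmxV Q_unit. Qed.
Lemma QiQ : Qi *m Q = 1%:M. Proof. exact: mulVmx Q_unit. Qed.
Lemma Qi_sym : Qi^T = Qi. Proof. by rewrite /Qinv trmx_inv Q_sym. Qed.

Lemma Qi_quad v : inner v (Qi *m v) = inner (Qi *m v) (Q *m (Qi *m v)).
Proof. by rewrite inner_sym ?Qi_sym // mulmxA QQi mul1mx. Qed.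

Lemma quad_Q_ge v : sqnorm v <= inner v (Q *m v).
Proof. by rewrite innerQ lerDl mulr_ge0 ?sqr_ge0 // ltW // c_gt0. Qed.

Lemma Qi_pos v : v != 0 -> 0 < inner v (Qi *m v).
Proof.
move=> hv; rewrite Qi_quad; apply: lt_le_trans (quad_Q_ge _).
rewrite lt_neqAle sqnorm_ge0 andbT eq_sym; apply/eqP => /sqnorm_eq0 h.
by move: hv; rewrite -[v]mul1mx -QQi -mulmxA h mulmx0 eqxx.
Qed.

Section PK.
Variable K : {set 'I_t}.
Local Notation B := (IK R K).
Local Notation G := (B *m Qi *m B^T).
Local Notation PK := (PK rho w K).

Lemma BBt : B *m B^T = 1%:M.
Proof.
apply/matrixP => k l; rewrite !mxE.
rewrite (bigD1 (enum_val k)) //= big1 ?addr0.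
  by rewrite !mxE eqxx mul1r (inj_eq enum_val_inj) eq_sym.
by move=> j hj; rewrite !mxE eq_sym (negbTE hj) mul0r.
Qed.

Lemma G_unit : G \in unitmx.
Proof.
apply: unit_of_inj => u hu.
have h1 : inner (B^T *m u) (Qi *m (B^T *m u)) = 0.
  move: hu; rewrite -!mulmxA => hu.
  by rewrite innerE trmx_mul trmxK -!mulmxA hu mulmx0 mxE.
have : B^T *m u = 0.
  have [//|hne] := eqVneq (B^T *m u) 0.
  by have := Qi_pos hne; rewrite h1 ltxx.
by move=> /(congr1 (mulmx B)); rewrite mulmxA BBt mul1mx mulmx0.
Qed.

Lemma BPK : B *m PK = 0.
Proof.
rewrite /PK mulmxBr !mulmxA.
by rewrite (mulmxV G_unit) mul1mx subrr.
Qed.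

Lemma QPK : Q *m PK = 1%:M - B^T *m (invmx G *m B *m Qi).
Proof. by rewrite /PK mulmxBr !mulmxA QQi !mul1mx. Qed.

Lemma PK_sym : PK^T = PK.
Proof.
rewrite /PK linearB /= !trmx_mul trmxK Qi_sym trmx_inv !trmx_mul trmxK Qi_sym.
by rewrite !mulmxA.
Qed.

Lemma PKB : PK *m B^T = 0.
Proof. by rewrite -PK_sym -trmx_mul BPK trmx0. Qed.

Lemma PK_quad v : inner v (PK *m v) = inner (PK *m v) (Q *m (PK *m v)).
Proof.
have e : PK *m (Q *m PK) = PK.
  by rewrite QPK mulmxBr mulmx1 mulmxA PKB mul0mx subr0.
rewrite (inner_sym _ _ Q_sym) mulmxA -inner_tr trmx_mul PK_sym Q_sym.
by rewrite mulmxA -(mulmxA PK Q PK) e.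
Qed.

Lemma PK_psd v : 0 <= inner v (PK *m v).
Proof. by rewrite PK_quad; apply: le_trans (quad_Q_ge _); apply: sqnorm_ge0. Qed.
End PK.

Lemma Qi_psd v : 0 <= inner v (Qi *m v).
Proof. by rewrite Qi_quad; apply: le_trans (quad_Q_ge _); apply: sqnorm_ge0. Qed.

Lemma Bx_entry (K : {set 'I_t}) x j (hj : j \in K) : (IK R K *m x) (enum_rank_in hj j) 0 = x j 0.
Proof.
rewrite mxE (bigD1 j) //= big1 ?addr0.
  by rewrite mxE enum_rankK_in // eqxx mul1r.
move=> l hl; rewrite mxE enum_rankK_in // eq_sym (negbTE hl) mul0r //.
Qed.

Lemma Btu_entry (K : {set 'I_t}) (u : 'cV[R]_#|K|) j : j \notin K -> ((IK R K)^T *m u) j 0 = 0.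
Proof.
move=> hj; rewrite mxE big1 // => k _; rewrite !mxE.
have hk := enum_valP k.
have -> : (enum_val k == j) = false.
  by apply/eqP => e; move: hk; rewrite e (negbTE hj).
by rewrite mul0r.
Qed.

Lemma d_zero d (K : {set 'I_t}) : (forall j, j \in K -> d j 0 = 0) ->
  (forall j, j \notin K -> (Q *m d) j 0 = 0) -> d = 0.
Proof.
move=> h1 h2; apply: sqnorm_eq0; apply/le_anti; rewrite sqnorm_ge0 andbT.
apply: le_trans (quad_Q_ge d) _; rewrite le_eqVlt; apply/orP; left; apply/eqP.
rewrite /inner big1 // => j _; case: (boolP (j \in K)) => hj.
  by rewrite h1 // mul0r.
by rewrite h2 // mulr0.
Qed.

Lemma PK_x y K : Kfam rho w y K -> PK rho w K *m y = xsol rho w y.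
Proof.
move=> [hsupp hI].
apply/eqP; rewrite eq_sym -subr_eq0; apply/eqP; apply: (d_zero (K := K)).
  move=> j hj; rewrite mxBE.
  have := fintype.subsetP hI j hj; rewrite inE => /eqP ->.
  rewrite -(Bx_entry _ hj) mulmxA BPK mul0mx mxE; lra.
move=> j hj; rewrite mulmxBr mxBE mulmxA QPK mulmxBl mul1mx mxBE.
rewrite -[(IK R K)^T *m _ *m y]mulmxA Btu_entry // subr0.
have : j \notin suppmu rho w y by apply: contra hj; apply: (fintype.subsetP hsupp).
rewrite inE negbK /mult mxBE subr_eq0 => /eqP ->; lra.
Qed.

Lemma Qi_x y : (forall i, 0 <= (Qi *m y) i 0) -> Qi *m y = xsol rho w y.
Proof.
move=> h; apply/esym/KKT_xsol; split => // i; rewrite mulmxA QQi mul1mx //.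
Qed.

Lemma PK0 (K : {set 'I_t}) : K = finset.set0 -> PK rho w K = Qi.
Proof.
move=> hK; rewrite /PK.
have -> : Qi *m (IK R K)^T = 0.
  have h0 : #|K| = 0%N by rewrite hK cards0.
  by apply/matrixP => i [m hm]; exfalso; move: hm; rewrite h0.
by rewrite !mul0mx subr0.
Qed.

Lemma hatJ_E y P : hatJ rho w y P <->
  ((forall i, 0 <= (Qi *m y) i 0) /\ P = Qi) \/ (exists2 K, Kfam rho w y K & P = PK rho w K).
Proof.
rewrite /hatJ; case: asboolP => h1.
  split; first by move=> ->; left; split => // i; apply: ltW.
  case => [[_ ->] // | [K hK ->]]; apply: PK0.
  apply/setP => j; rewrite inE; apply/negbTE; apply/negP => hj.
  have := fintype.subsetP hK.2 j hj; rewrite inE.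
  rewrite -Qi_x; last by move=> i; apply: ltW.
  by move/eqP => e; have := h1 j; rewrite e ltxx.
case: asboolP => h2.
  split; first by move=> H; right.
  case => [[hb _]|//]; exfalso; case: h2 => i hi; have := hb i; lra.
split.
  case => [->|H]; [left; split => // i|by right].
  by rewrite leNgt; apply/negP => hi; apply: h2; exists i.
by case => [[_ ->]|H]; [left|right].
Qed.

Lemma hatJ_apply y P : hatJ rho w y P -> P *m y = xsol rho w y.
Proof. by move/hatJ_E => [[h ->]|[K hK ->]]; [apply: Qi_x | apply: PK_x]. Qed.

Lemma Kfam_I y : Kfam rho w y (Iset rho w y).
Proof.
split => //; apply/fintype.subsetP => j; rewrite !inE /mult mxBE => hm.
have := xsol_ge0 y j; rewrite le_eqVlt => /orP[/eqP <-//|hp].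
by case: (xsol_KKT y) => _ _ /(_ j hp) e; move: hm; rewrite e subrr eqxx.
Qed.

Lemma hatJ_ex y : exists P, hatJ rho w y P.
Proof. by exists (PK rho w (Iset rho w y)); apply/hatJ_E; right; exists (Iset rho w y) => //; apply: Kfam_I. Qed.

Lemma hatJ_psd y P : hatJ rho w y P -> P^T = P /\ forall v, 0 <= inner v (P *m v).
Proof.
move/hatJ_E => [[_ ->]|[K _ ->]]; first by split; [apply: Qi_sym | apply: Qi_psd].
by split; [apply: PK_sym | apply: PK_psd].
Qed.

Definition sgv a : 'cV[R]_t := \col_i Num.sg (a i 0).

Lemma SGN_sgv a : SGN a (sgv a).
Proof.
move=> j; split; first by rewrite mxE.
by move=> e; rewrite mxE e sgr0 lerN10 ler01.
Qed.

Lemma Diagv_mul (th : 'cV[R]_t) v i : (Diagv th *m v) i 0 = th i 0 * v i 0.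
Proof. by rewrite /Diagv mul_diag_mx !mxE. Qed.

Lemma Diagv_sym (th : 'cV[R]_t) : (Diagv th)^T = Diagv th.
Proof. exact: tr_diag_mx. Qed.

Lemma SGN_abs a th : SGN a th -> Diagv th *m a = absv a.
Proof.
move=> h; apply/matrixP => i j; rewrite (ord1 j) Diagv_mul absvE.
have [e|ne] := eqVneq (a i 0) 0; first by rewrite e mulr0 normr0.
by rewrite (h i).1 // -normrEsg.
Qed.

Lemma dHS_apply a th P : SGN a th -> hatJ rho w (absv a) P ->
  Diagv th *m P *m Diagv th *m a = proxf a.
Proof.
move=> hth hP; rewrite -!mulmxA (SGN_abs hth) (hatJ_apply hP).
apply/matrixP => i j; rewrite (ord1 j) Diagv_mul mxE.
have [e|ne] := eqVneq (a i 0) 0.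
  by rewrite e sgr0 !xsol_a0 ?mulr0 ?mul0r // absvE e normr0.
by rewrite (hth i).1.
Qed.

Lemma dHS_psd a M : dHSProx rho w a M ->
  M^T = M /\ forall v, 0 <= (v^T *m M *m v) 0 0.
Proof.
move=> [th [P [hth hP ->]]]; have [Ps Pp] := hatJ_psd hP.
split; first by rewrite !trmx_mul Diagv_sym Ps mulmxA.
move=> v; rewrite -mulmxA -innerE -!mulmxA inner_sym ?Diagv_sym //.
Qed.

Lemma entry_le_norm m n (M : 'M[R]_(m, n)) i j : `|M i j| <= `|M|.
Proof.
rewrite [leRHS]/Num.norm /= mx_normrE.
exact: (le_bigmax _ (fun ij : 'I_m * 'I_n => `|M ij.1 ij.2|) (i, j)).
Qed.

Lemma sq_le_abs (p q : R) : `|p| <= `|q| -> p ^+ 2 <= q ^+ 2.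
Proof.
move=> h; rewrite -(real_normK (num_real p)) -(real_normK (num_real q)).
have := normr_ge0 p; nra.
Qed.

Lemma sqnorm_le_norm v : sqnorm v <= t%:R * `|v| ^+ 2.
Proof.
apply: le_trans (_ : \sum_(i < t) `|v| ^+ 2 <= _).
  apply: ler_sum => i _; apply: sq_le_abs; rewrite normr_id; exact: entry_le_norm.
by rewrite sumr_const card_ord mulr_natl.
Qed.

Lemma VI y x z : KKT y x -> nonneg_vec z -> 0 <= inner (z - x) (Q *m x - y).
Proof.
move=> [x0 mu0 cs] z0.
rewrite innerBl.
have -> : inner x (Q *m x - y) = 0.
  rewrite /inner big1 // => i _; rewrite mxBE.
  have := x0 i; rewrite le_eqVlt => /orP[/eqP <-|/cs ->]; first by rewrite mul0r.
  by rewrite subrr mulr0.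
rewrite subr0; apply: sumr_ge0 => i _; rewrite mxBE; apply: mulr_ge0 => //.
by rewrite subr_ge0.
Qed.

Lemma xsol_lip y1 y2 : sqnorm (xsol rho w y1 - xsol rho w y2) <= sqnorm (y1 - y2).
Proof.
have h1 := VI (xsol_KKT y1) (xsol_ge0 y2).
have h2 := VI (xsol_KKT y2) (xsol_ge0 y1).
have h3 := quad_Q_ge (xsol rho w y1 - xsol rho w y2).
have h4 := sqnorm_ge0 (xsol rho w y1 - xsol rho w y2 - (y1 - y2)).
move: h1 h2 h3 h4; rewrite !sqnormE !mulmxBr ?innerBl ?innerBr ?innerBl ?innerBr.
rewrite ?(innerC (xsol rho w y2) (xsol rho w y1)) ?(innerC y1 (xsol rho w y1)).
rewrite ?(innerC y1 (xsol rho w y2)) ?(innerC y2 (xsol rho w y1)) ?(innerC y2 (xsol rho w y2)).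
rewrite ?(innerC y2 y1) (inner_sym (xsol rho w y2) (xsol rho w y1) Q_sym).
rewrite (innerC (Q *m xsol rho w y2)).
lra.
Qed.

Lemma abs_lip a1 a2 : sqnorm (absv a1 - absv a2) <= sqnorm (a1 - a2).
Proof.
apply: ler_sum => i _; rewrite !mxBE !absvE; apply: sq_le_abs.
exact: (@ler_dist_dist _ R^o).
Qed.

Lemma coord_bound (p m : R) : 0 <= m -> p ^+ 2 <= t%:R * m ^+ 2 -> `|p| <= (t%:R + 1) * m.
Proof.
move=> m0 h; rewrite -(real_normK (num_real p)) in h.
have P0 := normr_ge0 p; have t0 : 0 <= (t%:R : R) by [].
set P := `|p| in h P0 *; set T := (t%:R : R) in h t0 *.
have q0 : 0 <= (T + 1) * m by rewrite mulr_ge0 // addr_ge0.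
have e1 : T * m ^+ 2 <= ((T + 1) * m) ^+ 2.
  rewrite -subr_ge0; have -> : ((T + 1) * m) ^+ 2 - T * m ^+ 2 = (T * T + T + 1) * (m * m) by ring.
  by rewrite mulr_ge0 // ?mulr_ge0 // !addr_ge0 // mulr_ge0.
rewrite leNgt; apply/negP => hlt.
have : ((T + 1) * m) ^+ 2 < P ^+ 2 by nra.
lra.
Qed.

Definition lipat (f : 'cV[R]_t -> R) a :=
  exists2 L, 0 <= L & forall a', `|f a' - f a| <= L * `|a' - a|.

Lemma lipat_near f a e : lipat f a -> 0 < e -> \forall a' \near a, `|f a' - f a| < e.
Proof.
move=> [L L0 hL] e0.
have := @lip_cvg R _ f a L L0 hL.
move=> /cvgr_dist_lt /(_ e e0); apply: filterS => a' h; by rewrite distrC.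
Qed.

Lemma lipat_ext f g a : f =1 g -> lipat f a -> lipat g a.
Proof. by move=> e [L L0 h]; exists L => // a'; rewrite -!e. Qed.

Lemma lipat_cst k a : lipat (fun _ => k) a.
Proof. by exists 0 => // a'; rewrite subrr normr0 mul0r. Qed.

Lemma lipatD f g a : lipat f a -> lipat g a -> lipat (fun x => f x + g x) a.
Proof.
move=> [L1 L10 h1] [L2 L20 h2]; exists (L1 + L2); first exact: addr_ge0.
move=> a'; have -> : f a' + g a' - (f a + g a) = (f a' - f a) + (g a' - g a) by ring.
by apply: le_trans (ler_normD _ _) _; rewrite mulrDl lerD.
Qed.

Lemma lipatZ k f a : lipat f a -> lipat (fun x => k * f x) a.
Proof.
move=> [L L0 h]; exists (`|k| * L); first by rewrite mulr_ge0.
by move=> a'; rewrite -mulrBr normrM -mulrA ler_wpM2l.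
Qed.

Lemma lipatB f g a : lipat f a -> lipat g a -> lipat (fun x => f x - g x) a.
Proof.
move=> hf hg; apply: lipat_ext (lipatD hf (lipatZ (-1) hg)) => x.
by rewrite mulN1r.
Qed.

Lemma lipat_sum (F : 'I_t -> 'cV[R]_t -> R) a :
  (forall j, lipat (F j) a) -> lipat (fun x => \sum_(j < t) F j x) a.
Proof.
move=> h; rewrite /index_enum; elim: (Finite.enum _) => [|j s ih].
  by apply: lipat_ext (lipat_cst 0 a) => x; rewrite big_nil.
by apply: lipat_ext (lipatD (h j) ih) => x; rewrite big_cons.
Qed.

Lemma lipat_coord a i : lipat (fun x => x i 0) a.
Proof. by exists 1 => // a'; rewrite mul1r -mxBE entry_le_norm. Qed.

Lemma lipat_abs a i : lipat (fun x => `|x i 0|) a.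
Proof.
exists 1 => // a'; rewrite mul1r; apply: le_trans (@ler_dist_dist _ R^o _ _) _.
by rewrite -mxBE entry_le_norm.
Qed.

Lemma term_le_sqnorm v i : v i 0 ^+ 2 <= sqnorm v.
Proof.
rewrite /sqnorm (bigD1 i) //= lerDl; apply: sumr_ge0 => j _; exact: sqr_ge0.
Qed.

Lemma xsol_coord_lip a a' i :
  `|xsol rho w (absv a') i 0 - xsol rho w (absv a) i 0| <= (t%:R + 1) * `|a' - a|.
Proof.
apply: coord_bound => //.
rewrite -mxBE; apply: le_trans (term_le_sqnorm _ i) _.
apply: le_trans (xsol_lip _ _) _; apply: le_trans (abs_lip _ _) _.
exact: sqnorm_le_norm.
Qed.

Lemma lipat_x a i : lipat (fun x => xsol rho w (absv x) i 0) a.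
Proof. by exists (t%:R + 1) => // a'; apply: xsol_coord_lip. Qed.

Lemma lipat_mx (M : 'M[R]_t) (g : 'cV[R]_t -> 'cV[R]_t) a i :
  (forall j, lipat (fun x => g x j 0) a) -> lipat (fun x => (M *m g x) i 0) a.
Proof.
move=> h; apply: lipat_ext (lipat_sum (fun j => lipatZ (M i j) (h j))) => x.
by rewrite mxE.
Qed.

Lemma lipat_b a i : lipat (fun x => (Qi *m absv x) i 0) a.
Proof.
apply: lipat_mx => j; apply: lipat_ext (lipat_abs a j) => x.
by rewrite absvE.
Qed.

Lemma lipat_mu a i : lipat (fun x => mult rho w (absv x) i 0) a.
Proof.
apply: lipat_ext (lipatB (lipat_abs a i) (@lipat_mx Q (fun x => xsol rho w (absv x)) a i (lipat_x a))) => x.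
by rewrite /mult mxBE absvE.
Qed.

Lemma near_pos f a : lipat f a -> 0 < f a -> \forall x \near a, 0 < f x.
Proof.
move=> hf hp; apply: filterS (lipat_near hf hp) => x h.
have h2 : -(f x - f a) <= `|f x - f a| by rewrite -normrN ler_norm.
lra.
Qed.

Lemma near_neg f a : lipat f a -> f a < 0 -> \forall x \near a, f x < 0.
Proof.
move=> hf hp; have := near_pos (lipatZ (-1) hf); rewrite mulN1r oppr_gt0 => /(_ hp).
by apply: filterS => x; rewrite mulN1r oppr_gt0.
Qed.

Lemma near_neq0 f a : lipat f a -> f a != 0 -> \forall x \near a, f x != 0.
Proof.
move=> hf; rewrite neq_lt => /orP[h|h].
  by apply: filterS (near_neg hf h) => x /lt_eqF ->.
by apply: filterS (near_pos hf h) => x /gt_eqF ->.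
Qed.

Lemma near_impl (a : 'cV[R]_t) (P : Prop) (Pr : 'cV[R]_t -> Prop) :
  (P -> \forall x \near a, Pr x) -> \forall x \near a, P -> Pr x.
Proof.
move=> h; have [p|np] := pselect P.
  by apply: filterS (h p) => x hx _.
by apply: filterE => x /np.
Qed.

Lemma near_all (a : 'cV[R]_t) (P : 'I_t -> 'cV[R]_t -> Prop) :
  (forall i, \forall x \near a, P i x) -> \forall x \near a, forall i, P i x.
Proof. by move=> h; apply: (@filter_forall _ _ (fun i x => P i x) _ _ h). Qed.

Lemma near_sg a i : \forall x \near a, a i 0 != 0 -> Num.sg ((x : 'cV[R]_t) i 0) = Num.sg (a i 0).
Proof.
apply: near_impl => hne.
have [h|h|h] := ltrgtP (a i 0) 0.
- by apply: filterS (near_neg (lipat_coord a i) h) => x hx; rewrite !ltr0_sg.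
- by apply: filterS (near_pos (lipat_coord a i) h) => x hx; rewrite !gtr0_sg.
- by move: hne; rewrite h eqxx.
Qed.

Lemma near_SGN a : \forall x \near a, forall th, SGN x th -> SGN a th.
Proof.
apply: filterS (near_all (fun i => near_sg a i)) => x hx th hth j; split.
  by move=> hj; rewrite -(hx j hj); apply: (hth j).1; rewrite -sgr_eq0 (hx j hj) sgr_eq0.
move=> hj; have [e|ne] := eqVneq (x j 0) 0; first exact: (hth j).2.
rewrite (hth j).1 //; have [h|h|h] := ltrgtP (x j 0) 0.
- by rewrite ltr0_sg //; apply/andP; split; lra.
- by rewrite gtr0_sg //; apply/andP; split; lra.
- by move: ne; rewrite h eqxx.
Qed.

Lemma near_hatJ a : \forall x \near a, forall P, hatJ rho w (absv x) P -> hatJ rho w (absv a) P.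
Proof.
have C1 := near_all (fun i => near_impl (fun h : (Qi *m absv a) i 0 < 0 =>
  near_neg (lipat_b a i) h)).
have C2 := near_all (fun i => near_impl (fun h : xsol rho w (absv a) i 0 != 0 =>
  near_neq0 (lipat_x a i) h)).
have C3 := near_all (fun i => near_impl (fun h : mult rho w (absv a) i 0 != 0 =>
  near_neq0 (lipat_mu a i) h)).
apply: filterS (filterI C1 (filterI C2 C3)) => x [c1 [c2 c3]] P /hatJ_E hP.
apply/hatJ_E; case: hP => [[hb ->]|[K [hs hI] ->]].
  by left; split => // i; rewrite leNgt; apply/negP => /c1; rewrite ltNge hb.
right; exists K => //; rewrite /Kfam; split.
  apply: (fintype.subset_trans _ hs); apply/fintype.subsetP => j; rewrite !inE; exact: c3.
apply: (fintype.subset_trans hI); apply/fintype.subsetP => j; rewrite !inE.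
by apply: contraLR => /c2.
Qed.

Lemma near_dHS a : \forall x \near a, forall M, dHSProx rho w x M -> dHSProx rho w a M.
Proof.
apply: filterS (filterI (near_SGN a) (near_hatJ a)) => x [h1 h2] M [th [P [hth hP ->]]].
by exists th, P; split; [apply: h1 | apply: h2 |].
Qed.

Lemma dHS_apply' a M : dHSProx rho w a M -> M *m a = Prox rho w a.
Proof. by move=> [th [P [hth hP ->]]]; rewrite Prox_eq; apply: dHS_apply. Qed.

Lemma dHS_ex a : exists M, dHSProx rho w a M.
Proof.
have [P hP] := hatJ_ex (absv a).
by exists (Diagv (sgv a) *m P *m Diagv (sgv a)), (sgv a), P; split => //; apply: SGN_sgv.
Qed.

Lemma zero_err a : \forall x \near a, forall M, dHSProx rho w x M ->
  Prox rho w x - Prox rho w a = M *m (x - a).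
Proof.
apply: filterS (near_dHS a) => x h M hM.
by rewrite mulmxBr (dHS_apply' hM) (dHS_apply' (h M hM)).
Qed.

Lemma norm_le_entries m n (M : 'M[R]_(m, n)) e : 0 <= e ->
  (forall i j, `|M i j| <= e) -> `|M| <= e.
Proof.
move=> e0 h; rewrite [leLHS]/Num.norm /= mx_normrE.
by apply: bigmax_le => // ij _; apply: h.
Qed.

Lemma Prox_lip x y : `|Prox rho w x - Prox rho w y| <= (t%:R + 1) * `|x - y|.
Proof.
have n0 : 0 <= `|x - y| by [].
apply: norm_le_entries; first by rewrite mulr_ge0 // addr_ge0.
move=> i j; rewrite (ord1 j) mxBE !Prox_eq !mxE.
set X := xsol rho w (absv x) i 0; set Y := xsol rho w (absv y) i 0.
have hX0 : 0 <= X := xsol_ge0 _ _.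
have hY0 : 0 <= Y := xsol_ge0 _ _.
have hXa : X <= `|x i 0|.
  by apply: le_trans (xsol_le_a _ _) _; rewrite absvE ge_max lexx normr_ge0.
have hYa : Y <= `|y i 0|.
  by apply: le_trans (xsol_le_a _ _) _; rewrite absvE ge_max lexx normr_ge0.
have := xsol_coord_lip y x i; rewrite -/X -/Y ler_norml => /andP[hd1 hd2].
have := entry_le_norm (x - y) i 0; rewrite mxBE ler_norml => /andP[he1 he2].
set n := `|x - y| in n0 hd1 hd2 he1 he2 *.
have hL : n <= (t%:R + 1) * n.
  by rewrite ler_peMl // lerDr.
have hn : -n <= x i 0 - y i 0 <= n by rewrite he1 he2.
rewrite ler_norml.
have [h1|h1|h1] := ltrgtP (x i 0) 0; have [h2|h2|h2] := ltrgtP (y i 0) 0;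
  rewrite ?(ltr0_sg h1) ?(gtr0_sg h1) ?(ltr0_sg h2) ?(gtr0_sg h2) ?h1 ?h2 ?sgr0;
  rewrite ?(ltr0_norm h1) ?(gtr0_norm h1) ?(ltr0_norm h2) ?(gtr0_norm h2) ?h1 ?h2 ?normr0 in hXa hYa;
  apply/andP; split; lra.
Qed.

Lemma near_R (x0 : R) (P : R -> Prop) :
  (exists2 e, 0 < e & forall (s : R), `|s - x0| < e -> P s) -> \forall s \near x0, P (s : R).
Proof.
move=> [e e0 h]; apply/nbhs_ballP; exists e => // s /= hy; apply: h.
by move: hy; rewrite /ball /= distrC.
Qed.

Lemma near_cV (a : 'cV[R]_t) (P : 'cV[R]_t -> Prop) :
  (\forall x \near a, P x) -> exists2 e, 0 < e & forall x, `|x - a| < e -> P x.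
Proof.
move=> /nbhs_normP [e e0 h]; exists e => // x hx; apply: h => /=.
by rewrite distrC.
Qed.

Lemma near_line (a d : 'cV[R]_t) (x0 : R) (P : 'cV[R]_t -> Prop) :
  (\forall x \near (a + x0 *: d), P x) -> \forall s \near x0, P (a + (s : R) *: d).
Proof.
move=> /near_cV [e e0 h]; apply: near_R.
exists (e / (`|d| + 1)); first by rewrite divr_gt0 // ltr_wpDl.
move=> s hy; apply: h.
have -> : a + s *: d - (a + x0 *: d) = (s - x0) *: d by rewrite scalerBl opprD addrACA subrr add0r.
rewrite normrZ; apply: le_lt_trans (_ : `|s - x0| * (`|d| + 1) < e).
  by rewrite ler_wpM2l // lerDl.
by rewrite -ltr_pdivlMr // ltr_wpDl.
Qed.
Lemma dirdiff a : dir_differentiable (Prox rho w) a.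
Proof.
move=> d.
set F := Prox rho w.
pose h := fun s : R => s^-1 *: (F (a + s *: d) - F a).
have [r r0 hr] := near_cV (zero_err a).
pose del := r / (`|d| + 1).
have d1 : 0 < `|d| + 1 by rewrite ltr_wpDl.
have del0 : 0 < del by rewrite divr_gt0.
have hval : forall s, 0 < s < del -> forall M, dHSProx rho w (a + s *: d) M -> h s = M *m d.
  move=> s /andP[s0 s1] M hM.
  have hn : `|a + s *: d - a| < r.
    rewrite addrC addKr normrZ gtr0_norm //.
    apply: le_lt_trans (_ : s * (`|d| + 1) < r); first by rewrite (ler_wpM2l (ltW s0)) // lerDl.
    by rewrite -ltr_pdivlMr.
  have e := hr _ hn M hM.
  rewrite /h e addrC addKr -scalemxAr scalerA mulVf ?scale1r //.
  by rewrite gt_eqF.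
have hloc : forall s0, 0 < s0 < del -> \forall s \near s0, h s = h s0.
  move=> s0 hs0.
  have N1 := near_line (near_dHS (a + s0 *: d)).
  have N2 : \forall s \near s0, 0 < s < del.
    apply: near_R; exists (Num.min s0 (del - s0)).
      by rewrite lt_min; move: hs0 => /andP[h1 h2]; rewrite h1 subr_gt0 h2.
    move=> s; rewrite lt_min => /andP[h1 h2].
    have := ler_norm (s - s0); have : -(s - s0) <= `|s - s0| by rewrite -normrN ler_norm.
    move: hs0 => /andP[h3 h4] h5 h6; apply/andP; split; lra.
  apply: filterS (filterI N1 N2) => s [h1 h2].
  have [M hM] := dHS_ex (a + s *: d).
  by rewrite (hval s h2 M hM) (hval s0 hs0 M (h1 M hM)).
have hconst : forall s1 s2, 0 < s1 < del -> 0 < s2 < del -> h s1 = h s2.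
  suff H : forall s1 s2, s1 <= s2 -> 0 < s1 < del -> 0 < s2 < del -> h s1 = h s2.
    move=> s1 s2 h1 h2; have [l|l] := leP s1 s2; first exact: H.
    by apply/esym; apply: H => //; apply: ltW.
  move=> s1 s2 le12 h1 h2; apply/eqP; apply/negP => /negP hne.
  pose phi := fun s => if h s == h s1 then (0:R) else 1.
  have cphi : {within `[s1, s2], continuous phi}.
    apply: continuous_in_subspaceT => c hc.
    have hcd : 0 < c < del.
      move: hc; rewrite inE /= in_itv /= => /andP[c1 c2].
      move: h1 h2 => /andP[h11 h12] /andP[h21 h22]; apply/andP; split; lra.
    apply: (near_cst_continuous (phi c)); apply: filterS (hloc c hcd) => s e.
    by rewrite /phi e.
  have p1 : phi s1 = 0 by rewrite /phi eqxx.
  have p2 : phi s2 = 1 by rewrite /phi eq_sym (negbTE hne).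
  have i2 : (2:R)^-1 * 2 = 1 by rewrite mulVf // pnatr_eq0.
  have [c _] := @IVT R phi s1 s2 2^-1 le12 cphi
    ltac:(rewrite p1 p2 ge_min le_max; apply/andP; split; [apply/orP; left | apply/orP; right];
      [by rewrite invr_ge0 ler0n | by rewrite invf_le1 ?ltr0n // ler1n]).
  rewrite /phi; case: ifP => _.
    by move/eqP; rewrite eq_sym invr_eq0 pnatr_eq0.
  by move=> e; move: i2; rewrite -e mul1r => /eqP; rewrite (eqr_nat R 2 1).
exists (h (del / 2)).
apply: cvg_near_cst.
apply: filterS (filterI (nbhs_right_gt 0) (nbhs_right_lt del0)) => s [s0 s1].
apply: hconst; first by rewrite s0 s1.
by rewrite divr_gt0 // ltr_pdivrMr // ltr_pMr // ltr1n.
Qed.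
Lemma cont_of_loclip (V W : normedModType R) (f : V -> W) (x0 : V) C : 0 <= C ->
  (forall q : V, `|q - x0| <= 1 -> `|f q - f x0| <= C * `|q - x0|) -> f @ x0 --> f x0.
Proof.
move=> C0 H; apply/cvgrPdist_lt => e e0.
have C1 : 0 < C + 1 by rewrite ltr_wpDl.
apply/nbhs_normP; exists (Num.min 1 (e / (C + 1))) => /=.
  by rewrite lt_min ltr01 divr_gt0.
move=> q /=; rewrite distrC lt_min => /andP[h1 h2].
rewrite distrC; apply: le_lt_trans (H q (ltW h1)) _.
apply: (@le_lt_trans _ _ (C * (e / (C + 1)))).
  by rewrite ler_wpM2l // ltW.
rewrite mulrA ltr_pdivrMr //. nra.
Qed.

Lemma mxBE2 m n (A B : 'M[R]_(m, n)) i j : (A - B) i j = A i j - B i j.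
Proof. by rewrite !mxE. Qed.

Definition fP (P : 'M[R]_t) (r : 'rV[R]_t) : 'M[R]_t := diag_mx r *m P *m diag_mx r.

Lemma fP_entry P r i j : fP P r i j = r 0 i * P i j * r 0 j.
Proof. by rewrite /fP mul_mx_diag mul_diag_mx !mxE. Qed.

Lemma fP_cont P : continuous (fP P).
Proof.
move=> r; apply: (@cont_of_loclip _ _ _ _ (`|P| * (2 * `|r| + 1))).
  by rewrite mulr_ge0 // addr_ge0 // mulr_ge0.
move=> r' hr'; apply: norm_le_entries; first by rewrite !mulr_ge0 // addr_ge0 // mulr_ge0.
move=> i j; rewrite mxBE2 !fP_entry.
set n := `|r' - r| in hr' *.
have n0 : 0 <= n by rewrite /n normr_ge0.
have hAa : `|r' 0 i - r 0 i| <= n by rewrite -mxBE2 entry_le_norm.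
have hBb : `|r' 0 j - r 0 j| <= n by rewrite -mxBE2 entry_le_norm.
have hb : `|r 0 j| <= `|r| by apply: entry_le_norm.
have ha : `|r 0 i| <= `|r| by apply: entry_le_norm.
have hA : `|r' 0 i| <= `|r| + 1.
  have -> : r' 0 i = r 0 i + (r' 0 i - r 0 i) by ring.
  apply: le_trans (ler_normD _ _) _; apply: lerD => //; exact: le_trans hAa hr'.
have hp : `|P i j| <= `|P| by apply: entry_le_norm.
have -> : r' 0 i * P i j * r' 0 j - r 0 i * P i j * r 0 j =
  P i j * (r' 0 i * (r' 0 j - r 0 j) + r 0 j * (r' 0 i - r 0 i)) by ring.
rewrite normrM -mulrA; apply: ler_pM => //.
apply: le_trans (ler_normD _ _) _; rewrite !normrM.
have -> : (2 * `|r| + 1) * n = (`|r| + 1) * n + `|r| * n by ring.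
by apply: lerD; apply: ler_pM.
Qed.
Definition Abox a (i : 'I_t) : set R :=
  if a i 0 == 0 then `[-1, 1]%classic else [set Num.sg (a i 0)].
Definition Box a := [set r : 'rV[R]_t | forall i, Abox a i (r 0 i)].

Lemma Box_compact a : compact (Box a).
Proof.
apply: (@rV_compact R^o t (Abox a)) => i; rewrite /Abox.
by case: ifP => _; [apply: segment_compact | apply: compact_set1].
Qed.

Lemma SGN_Box a th : SGN a th -> Box a th^T.
Proof.
move=> h i; rewrite /Abox mxE; case: eqP => [e|/eqP ne]; last by rewrite /= (h i).1.
by rewrite /= in_itv /=; apply: (h i).2.
Qed.

Lemma Box_SGN a r : Box a r -> SGN a r^T.
Proof.
move=> h j; have := h j; rewrite /Abox mxE; case: eqP => [e|/eqP ne] /= hj.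
  by split => // /eqP; rewrite e eqxx.
by split => // e; move: ne; rewrite e eqxx.
Qed.

Lemma foldr_compact (s : seq {set 'I_t}) (F : {set 'I_t} -> set 'M[R]_t) :
  (forall K, compact (F K)) -> compact (foldr (fun K acc => F K `|` acc) set0 s).
Proof.
move=> h; elim: s => [|K s ih] /=; first exact: compact0.
exact: compactU.
Qed.

Lemma foldr_mem (s : seq {set 'I_t}) (F : {set 'I_t} -> set 'M[R]_t) M :
  foldr (fun K acc => F K `|` acc) set0 s M <-> exists2 K, K \in s & F K M.
Proof.
elim: s => [|K s ih] /=; first by split => // -[].
split.
  case => [h|/ih [K' h1 h2]]; first by exists K; rewrite ?mem_head.
  by exists K' => //; rewrite in_cons h1 orbT.
move=> [K' +h]; rewrite in_cons => /orP[/eqP e|h1]; first by left; rewrite -e.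
by right; apply/ih; exists K'.
Qed.

Definition FK a (K : {set 'I_t}) : set 'M[R]_t :=
  if `[< Kfam rho w (absv a) K >] then fP (PK rho w K) @` Box a else set0.
Definition JQ a : set 'M[R]_t :=
  if `[< forall i, 0 <= (Qi *m absv a) i 0 >] then fP Qi @` Box a else set0.

Lemma img_compact P a : compact (fP P @` Box a).
Proof.
apply: continuous_compact; last exact: Box_compact.
exact: continuous_subspaceT (@fP_cont P).
Qed.

Lemma J_eq a : [set M | dHSProx rho w a M] =
  JQ a `|` foldr (fun K acc => FK a K `|` acc) set0 (enum {set 'I_t}).
Proof.
apply/seteqP; split => M.
  move=> [th [P [hth /hatJ_E hP ->]]].
  have ->: Diagv th *m P *m Diagv th = fP P th^T by [].
  case: hP => [[hb ->]|[K hK ->]].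
    by left; rewrite /JQ asboolT //; exists th^T => //; apply: SGN_Box.
  right; apply/foldr_mem; exists K; first by rewrite mem_enum.
  by rewrite /FK asboolT //; exists th^T => //; apply: SGN_Box.
case.
  rewrite /JQ; case: asboolP => // hb [r hr <-].
  exists r^T, Qi; split; first exact: Box_SGN.
    by apply/hatJ_E; left.
  by rewrite /Diagv trmxK.
move/foldr_mem => [K _]; rewrite /FK; case: asboolP => // hK [r hr <-].
exists r^T, (PK rho w K); split; first exact: Box_SGN.
  by apply/hatJ_E; right; exists K.
by rewrite /Diagv trmxK.
Qed.

Lemma J_compact a : compact [set M | dHSProx rho w a M].
Proof.
rewrite J_eq; apply: compactU.
  by rewrite /JQ; case: asboolP => _; [apply: img_compact | apply: compact0].
apply: foldr_compact => K; rewrite /FK.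
by case: asboolP => _; [apply: img_compact | apply: compact0].
Qed.

End S.

Unset Implicit Arguments.

Theorem proposition3p4 (R : realType) (t : nat) (w : 'cV[R]_t) (rho : R) :
  (1 <= t)%N -> (forall i, 0 < w i 0) -> 0 < rho ->
  [/\ (forall a : 'cV[R]_t, exists M, dHSProx rho w a M),
      (forall a : 'cV[R]_t, compact [set M | dHSProx rho w a M]),
      upper_semicontinuous_mf (dHSProx rho w),
      (forall (a : 'cV[R]_t) M, dHSProx rho w a M ->
         M^T = M /\ forall v : 'cV[R]_t, 0 <= (v^T *m M *m v) 0 0) &
      strongly_semismooth (Prox rho w) (dHSProx rho w)].
Proof.
move=> _ hw hrho; split.
- by move=> a; apply: (dHS_ex hw hrho).
- by move=> a; apply: (J_compact hrho).
- move=> a U _ hU; apply: filterS (near_dHS hw hrho a) => x hx M hM.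
  by apply: hU; apply: hx.
- by move=> a M hM; apply: (dHS_psd hrho hM).
split.
  move=> a; exists (t%:R + 1), 1 => // x y _ _; exact: (Prox_lip hw hrho).
move=> a; split; first exact: (dirdiff hw hrho).
exists 1 => //; apply: filterS (zero_err hw hrho a) => x hx M hM.
by rewrite (hx M hM) subrr normr0 mul1r exprn_ge0.
Qed.
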